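(* Let $u:\mathbb{Z}^2\to\mathbb{C}$ be the centers of a square-grid circle pattern with all face variables nonzero. Let $X=X^{(b)}(u)$ and $X'=X^{(w)}(M_b(u))$. Then $$X'_{m,n}=\begin{cases}X_{m,n}^{-1}&(m,n)\text{ black},\\ X_{m,n}\dfrac{(1+X_{m,n+1})(1+X_{m,n-1})}{(1+X_{m+1,n}^{-1})(1+X_{m-1,n}^{-1})}&(m,n)\text{ white}.\end{cases}$$ In particular $X>0$ everywhere if and only if $X'>0$ everywhere. The same statement holds for the white mutation with the roles of black and white (and of $X^{(b)},X^{(w)}$) exchanged.
   Context: Faces of the square grid are indexed by $(m,n)\in\mathbb{Z}^2$; face $(m,n)$ is black if $m+n$ is even, white otherwise; a circle pattern assigns to each face a circle with center $u_{m,n}$ such that the four corners of each face lie on its circle. Conventions: for $u=u_{m,n}$, $X^{(b)}_{m,n}=-\frac{(u_{m+1,n}-u)(u_{m-1,n}-u)}{(u_{m,n+1}-u)(u_{m,n-1}-u)}$ if $(m,n)$ is black and $X^{(b)}_{m,n}=-\frac{(u_{m,n+1}-u)(u_{m,n-1}-u)}{(u_{m+1,n}-u)(u_{m-1,n}-u)}$ if $(m,n)$ is white; $X^{(w)}=1/X^{(b)}$. The central move at face $(m,n)$ replaces $u_{m,n}$ by the root $\tilde u\neq u_{m,n}$ of $\frac{(u_{m+1,n}-z)(u_{m-1,n}-z)}{(u_{m,n+1}-z)(u_{m,n-1}-z)}=\frac{(u_{m+1,n}-u_{m,n})(u_{m-1,n}-u_{m,n})}{(u_{m,n+1}-u_{m,n})(u_{m,n-1}-u_{m,n})}$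 (double root: $\tilde u=u_{m,n}$). The black mutation $M_b$ applies the central move simultaneously to all black faces (white centers unchanged); the white mutation $M_w$ likewise for white faces. Miquel dynamics alternates $M_b$ and $M_w$. *)

(* Defs.v *)
(* Complex numbers are modelled by an arbitrary
   numClosedFieldType C (e.g. algC); the statement is purely algebraic. *)
From HB Require Import structures.
From mathcomp Require Import all_boot all_order all_algebra.
Set Implicit Arguments. Unset Strict Implicit. Unset Printing Implicit Defensive.
Import Order.TTheory GRing.Theory Num.Theory.
Local Open Scope ring_scope.

Definition black (m n : int) : bool := (2 %| m + n)%Z.

Definition hprod (C : numClosedFieldType) (u : int -> int -> C) (m n : int) : C :=
  (u (m + 1) n - u m n) * (u (m - 1) n - u m n).
Definition vprod (C : numClosedFieldType) (u : int -> int -> C) (m n : int) : C :=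
  (u m (n + 1) - u m n) * (u m (n - 1) - u m n).

Definition Xb (C : numClosedFieldType) (u : int -> int -> C) (m n : int) : C :=
  if black m n then - (hprod u m n / vprod u m n)
  else - (vprod u m n / hprod u m n).
Definition Xw (C : numClosedFieldType) (u : int -> int -> C) (m n : int) : C :=
  (Xb u m n)^-1.

(* All face variables are nonzero (and finite): numerator and denominator of
   every X_{m,n} are nonzero. *)
Definition face_variables_nonzero (C : numClosedFieldType) (u : int -> int -> C) : Prop :=
  forall m n, hprod u m n != 0 /\ vprod u m n != 0.

(* u is the family of centres of a square-grid circle pattern: there are
   vertex positions p (vertex (i,j) of Z^2), the four corners
   (m,n),(m+1,n),(m,n+1),(m+1,n+1) of face (m,n) being distinct points lying
   on a circle centred at u m n. *)
Definition is_circle_pattern (C : numClosedFieldType) (u : int -> int -> C) : Prop :=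
  exists p : int -> int -> C, forall m n,
    let cs := [:: p m n; p (m + 1) n; p m (n + 1); p (m + 1) (n + 1)] in
    uniq cs /\ exists r : C, forall z, z \in cs -> `|z - u m n| = r.

(* Cross-multiplied central-move equation in the unknown z:
   (a - z)(b - z)(c - x)(d - x) - (a - x)(b - x)(c - z)(d - z),
   where a,b are the horizontal and c,d the vertical neighbouring centres
   and x the current centre. *)
Definition central_poly (C : numClosedFieldType) (a b c d x : C) : {poly C} :=
  ('X - a%:P) * ('X - b%:P) * ((c - x) * (d - x))%:P
  - ((a - x) * (b - x))%:P * (('X - c%:P) * ('X - d%:P)).

(* y is the result of the central move at a face with current centre x:
   the equation is a genuine quadratic and its two roots (with multiplicity)
   are x and y, i.e. y is the root different from x, or y = x for a double
   root. *)
Definition central_move (C : numClosedFieldType) (a b c d x y : C) : Prop :=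
  let P := central_poly a b c d x in
  size P = 3%N /\ P = lead_coef P *: (('X - x%:P) * ('X - y%:P)).

Definition mutation (C : numClosedFieldType) (col : bool) (u u' : int -> int -> C) : Prop :=
  forall m n,
    if black m n == col then
      central_move (u (m + 1) n) (u (m - 1) n) (u m (n + 1)) (u m (n - 1)) (u m n) (u' m n)
    else u' m n = u m n.

Definition black_mutation (C : numClosedFieldType) := @mutation C true.
Definition white_mutation (C : numClosedFieldType) := @mutation C false.

(* Main.v *)
Require Import Defs.
From HB Require Import structures.
From mathcomp Require Import all_boot all_order all_algebra zify ring lra.
Import Order.TTheory GRing.Theory Num.Theory.
Set Implicit Arguments. Unset Strict Implicit. Unset Printing Implicit Defensive.
Local Open Scope ring_scope.

Lemma gen2 (R : comNzRingType) (X A B Cc D V H : R) :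
  (X - A) * (X - B) * V - H * ((X - Cc) * (X - D)) =
  (V - H) * X ^+ 2 - (V * (A + B) - H * (Cc + D)) * X + (V * (A * B) - H * (Cc * D)).
Proof. ring. Qed.

Section S.
Variable C : numClosedFieldType.

Lemma vieta (a b c d x y : C) : central_move a b c d x y ->
  let H := (a - x) * (b - x) in let V := (c - x) * (d - x) in
  V - H != 0 /\ forall z, V * ((z - a) * (z - b)) - H * ((z - c) * (z - d))
     = (V - H) * ((z - x) * (z - y)).
Proof.
move=> [Hs HP] H V.
have Pe : central_poly a b c d x = (V%:P - H%:P) * 'X^2 - (V%:P * (a%:P + b%:P) - H%:P * (c%:P + d%:P)) * 'X
   + (V%:P * (a%:P * b%:P) - H%:P * (c%:P * d%:P)).
  by rewrite /central_poly -/H -/V gen2.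
have Hl : lead_coef (central_poly a b c d x) = V - H.
  rewrite lead_coefE Hs /= Pe !coefE /=. ring.
have {}HP : central_poly a b c d x = (V - H) *: (('X - x%:P) * ('X - y%:P)) by rewrite -Hl.
have HVH : V - H != 0.
  rewrite -Hl lead_coef_eq0; apply/eqP => e; by rewrite e size_poly0 in Hs.
split => // z.
have := congr1 (fun p => p.[z]) HP.
rewrite /central_poly !hornerE /= => <-.
rewrite /V /H; ring.
Qed.

Lemma vieta_z (a b c d x y z : C) : central_move a b c d x y ->
  ((c - x) * (d - x)) * ((z - a) * (z - b)) - ((a - x) * (b - x)) * ((z - c) * (z - d))
     = (((c - x) * (d - x)) - ((a - x) * (b - x))) * ((z - x) * (z - y)).
Proof. by move/vieta => [_ ->]. Qed.

Lemma vieta_lc (a b c d x y : C) : central_move a b c d x y ->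
  ((c - x) * (d - x)) - ((a - x) * (b - x)) != 0.
Proof. by move/vieta => [-> _]. Qed.

Lemma self_face (a b c d x y : C) : central_move a b c d x y ->
  c != a -> c != b -> d != a -> d != b -> (c - x) * (d - x) != 0 ->
  - (((a - y) * (b - y)) / ((c - y) * (d - y))) = - (((a - x) * (b - x)) / ((c - x) * (d - x))).
Proof.
move=> hm ca cb da db nV.
have Ec := vieta_z c hm. have Ed := vieta_z d hm. have Ey := vieta_z y hm.
rewrite !subrr !(mulr0, mul0r, subr0) in Ec Ed Ey.
have cy : c - y != 0.
  apply/eqP => e; move: Ec; rewrite e !mulr0 => /eqP.
  by rewrite mulf_eq0 (negbTE nV) /= mulf_eq0 !subr_eq0 (negbTE ca) (negbTE cb).
have dy : d - y != 0.
  apply/eqP => e; move: Ed; rewrite e !mulr0 => /eqP.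
  by rewrite mulf_eq0 (negbTE nV) /= mulf_eq0 !subr_eq0 (negbTE da) (negbTE db).
congr (- _); apply/eqP; rewrite (@eqr_div _ _ _ _ _ (mulf_neq0 cy dy) nV) -subr_eq0; apply/eqP.
apply: etrans Ey. ring.
Qed.


Lemma ratio_core (a b c d p1 p2 p3 p4 HA VA HB VB HC VC HD VD A1 B1 C1 D1 : C) :
  a != 0 -> b != 0 -> c != 0 -> d != 0 ->
  p1 != 0 -> p2 != 0 -> p3 != 0 -> p4 != 0 ->
  HA != 0 -> VA != 0 -> HB != 0 -> VB != 0 -> HC != 0 -> VC != 0 -> HD != 0 -> VD != 0 ->
  VA - HA != 0 -> VB - HB != 0 -> VC - HC != 0 -> VD - HD != 0 ->
  A1 = HA * (p1 * p4) / ((VA - HA) * (- a)) ->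
  B1 = HB * (p2 * p3) / ((VB - HB) * (- b)) ->
  C1 = VC * (p1 * p2) / ((VC - HC) * c) ->
  D1 = VD * (p4 * p3) / ((VD - HD) * d) ->
  - ((A1 * B1) / (C1 * D1)) =
  - ((c * d) / (a * b)) * (1 + - (HC / VC)) * (1 + - (HD / VD))
    / ((1 + (- (HA / VA))^-1) * (1 + (- (HB / VB))^-1)).
Proof.
move=> na nb nc nd n1 n2 n3 n4 nHA nVA nHB nVB nHC nVC nHD nVD lA lB lC lD -> -> -> ->.
have eA : 1 + (- (HA / VA))^-1 = - ((VA - HA) / HA).
  rewrite invrN invf_div; field; by rewrite ?nHA ?nVA.
have eB : 1 + (- (HB / VB))^-1 = - ((VB - HB) / HB).
  rewrite invrN invf_div; field; by rewrite ?nHB ?nVB.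
have eC : 1 + - (HC / VC) = (VC - HC) / VC by field.
have eD : 1 + - (HD / VD) = (VD - HD) / VD by field.
rewrite eA eB eC eD.
field.
by rewrite ?na ?nb ?nc ?nd ?n1 ?n2 ?n3 ?n4 ?nHA ?nVA ?nHB ?nVB ?nHC ?nVC ?nHD ?nVD ?lA ?lB ?lC ?lD.
Qed.

Lemma hsolA (k q P h x y : C) : k != 0 -> q != 0 -> - (h * P) = k * (q * (x - y)) ->
  y - x = h * P / (k * q).
Proof. move=> hk hq E. apply: (mulIf (mulf_neq0 hk hq)). rewrite divfK ?mulf_neq0 //.
have -> : h * P = - (- (h * P)) by rewrite opprK.
rewrite E; ring. Qed.

Lemma hsolC (k q P h x y : C) : k != 0 -> q != 0 -> h * P = k * (q * (x - y)) ->
  y - x = h * P / (k * (- q)).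
Proof.
move=> hk hq E. have hq' : - q != 0 by rewrite oppr_eq0.
apply: (mulIf (mulf_neq0 hk hq')). rewrite divfK ?mulf_neq0 // E; ring.
Qed.

Lemma nb_face (x A B Cc D A' B' C' D' c1 c2 c3 c4 eA eB eC eD : C) :
  central_move eA x c1 c4 A A' ->
  central_move x eB c2 c3 B B' ->
  central_move c1 c2 eC x Cc C' ->
  central_move c4 c3 x eD D D' ->
  x != c1 -> x != c2 -> x != c3 -> x != c4 ->
  (A - x) * (B - x) != 0 -> (Cc - x) * (D - x) != 0 ->
  (eA - A) * (x - A) != 0 -> (c1 - A) * (c4 - A) != 0 ->
  (x - B) * (eB - B) != 0 -> (c2 - B) * (c3 - B) != 0 ->
  (c1 - Cc) * (c2 - Cc) != 0 -> (eC - Cc) * (x - Cc) != 0 ->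
  (c4 - D) * (c3 - D) != 0 -> (x - D) * (eD - D) != 0 ->
  - (((A' - x) * (B' - x)) / ((C' - x) * (D' - x))) =
  - (((Cc - x) * (D - x)) / ((A - x) * (B - x)))
    * (1 + - (((c1 - Cc) * (c2 - Cc)) / ((eC - Cc) * (x - Cc))))
    * (1 + - (((c4 - D) * (c3 - D)) / ((x - D) * (eD - D))))
    / ((1 + (- (((eA - A) * (x - A)) / ((c1 - A) * (c4 - A))))^-1)
       * (1 + (- (((x - B) * (eB - B)) / ((c2 - B) * (c3 - B))))^-1)).
Proof.
move=> hA hB hC hD x1 x2 x3 x4 nHx nVx nHA nVA nHB nVB nHC nVC nHD nVD.
have lA := vieta_lc hA. have lB := vieta_lc hB.
have lC := vieta_lc hC. have lD := vieta_lc hD.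
have EA := vieta_z x hA. have EB := vieta_z x hB.
have EC := vieta_z x hC. have ED := vieta_z x hD.
rewrite !subrr !(mulr0, mul0r, subr0, sub0r) in EA EB EC ED.
have [na nb] : A - x != 0 /\ B - x != 0 by move: nHx; rewrite mulf_eq0 negb_or => /andP.
have [nc nd] : Cc - x != 0 /\ D - x != 0 by move: nVx; rewrite mulf_eq0 negb_or => /andP.
have nq : forall y : C, y - x != 0 -> x - y != 0 by move=> y; rewrite !subr_eq0 eq_sym.
have n1 : x - c1 != 0 by rewrite subr_eq0.
have n2 : x - c2 != 0 by rewrite subr_eq0.
have n3 : x - c3 != 0 by rewrite subr_eq0.
have n4 : x - c4 != 0 by rewrite subr_eq0.
have sA : A' - x = (eA - A) * (x - A) * ((x - c1) * (x - c4))
     / (((c1 - A) * (c4 - A) - (eA - A) * (x - A)) * - (A - x)).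
  rewrite [- (A - x)]opprB; exact: hsolA lA (nq _ na) EA.
have sB : B' - x = (x - B) * (eB - B) * ((x - c2) * (x - c3))
     / (((c2 - B) * (c3 - B) - (x - B) * (eB - B)) * - (B - x)).
  rewrite [- (B - x)]opprB; exact: hsolA lB (nq _ nb) EB.
have sC : C' - x = (eC - Cc) * (x - Cc) * ((x - c1) * (x - c2))
     / (((eC - Cc) * (x - Cc) - (c1 - Cc) * (c2 - Cc)) * (Cc - x)).
  rewrite -[Cc - x]opprB; exact: hsolC lC (nq _ nc) EC.
have sD : D' - x = (x - D) * (eD - D) * ((x - c4) * (x - c3))
     / (((x - D) * (eD - D) - (c4 - D) * (c3 - D)) * (D - x)).
  rewrite -[D - x]opprB; exact: hsolC lD (nq _ nd) ED.
exact: (ratio_core na nb nc nd n1 n2 n3 n4 nHA nVA nHB nVB nHC nVC nHD nVD lA lB lC lD sA sB sC sD).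
Qed.

Lemma circ_q (a w r s : C) : a * a^* = r ^+ 2 -> (a + w) * (a^* + w^*) = s ^+ 2 ->
  a ^+ 2 * w^* + w * r ^+ 2 - (s ^+ 2 - r ^+ 2 - w * w^*) * a = 0.
Proof.
move=> e1 e2.
have -> : a ^+ 2 * w^* + w * r ^+ 2 - (s ^+ 2 - r ^+ 2 - w * w^*) * a =
  a * ((a + w) * (a^* + w^*) - s ^+ 2) - (a * a^* - r ^+ 2) * (a + w) by ring.
by rewrite e1 e2 !subrr mulr0 mul0r subrr.
Qed.

Lemma three_q (a1 a2 a3 wc w r k : C) : a1 != a2 -> a1 != a3 -> a2 != a3 ->
  a1 ^+ 2 * wc + w * r - k * a1 = 0 ->
  a2 ^+ 2 * wc + w * r - k * a2 = 0 ->
  a3 ^+ 2 * wc + w * r - k * a3 = 0 -> wc = 0.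
Proof.
move=> h12 h13 h23 q1 q2 q3.
have E12 : wc * (a1 + a2) = k.
  have : (a1 - a2) * (wc * (a1 + a2) - k) = (a1 ^+ 2 * wc + w * r - k * a1) - (a2 ^+ 2 * wc + w * r - k * a2) by ring.
  rewrite q1 q2 subrr => /eqP; rewrite mulf_eq0 subr_eq0 (negbTE h12) /= subr_eq0.
  by move/eqP.
have E13 : wc * (a1 + a3) = k.
  have : (a1 - a3) * (wc * (a1 + a3) - k) = (a1 ^+ 2 * wc + w * r - k * a1) - (a3 ^+ 2 * wc + w * r - k * a3) by ring.
  rewrite q1 q3 subrr => /eqP; rewrite mulf_eq0 subr_eq0 (negbTE h13) /= subr_eq0.
  by move/eqP.
have : wc * (a2 - a3) = wc * (a1 + a2) - wc * (a1 + a3) by ring.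
rewrite E12 E13 subrr => /eqP; rewrite mulf_eq0 subr_eq0 (negbTE h23) orbF.
by move/eqP.
Qed.

Lemma three_pts (z1 z2 z3 u v r s : C) : z1 != z2 -> z1 != z3 -> z2 != z3 ->
  `|z1 - u| = r -> `|z2 - u| = r -> `|z3 - u| = r ->
  `|z1 - v| = s -> `|z2 - v| = s -> `|z3 - v| = s -> u = v.
Proof.
move=> h12 h13 h23 r1 r2 r3 s1 s2 s3.
have Q : forall z, `|z - u| = r -> `|z - v| = s ->
    (z - u) ^+ 2 * (u - v)^* + (u - v) * r ^+ 2 - (s ^+ 2 - r ^+ 2 - (u - v) * (u - v)^*) * (z - u) = 0.
  move=> z e1 e2; apply: circ_q.
    by rewrite -normCK e1.
  by rewrite -rmorphD /= -normCK (_ : z - u + (u - v) = z - v) ?e2 //; ring.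
have d : forall a b, a != b -> a - u != b - u by move=> a b; rewrite (inj_eq (addIr (- u))).
have := three_q (d _ _ h12) (d _ _ h13) (d _ _ h23) (Q _ r1 s1) (Q _ r2 s2) (Q _ r3 s3).
move/eqP.
by rewrite conjC_eq0 subr_eq0 => /eqP.
Qed.
Lemma parity_l (m n : int) : black (m + 1) n = ~~ black m n.
Proof. rewrite /black; lia. Qed.
Lemma parity_l2 (m n : int) : black (m - 1) n = ~~ black m n.
Proof. rewrite /black; lia. Qed.
Lemma parity_r (m n : int) : black m (n + 1) = ~~ black m n.
Proof. rewrite /black; lia. Qed.
Lemma parity_r2 (m n : int) : black m (n - 1) = ~~ black m n.
Proof. rewrite /black; lia. Qed.

Lemma inl4 (T : eqType) (a b c d : T) :
  [/\ a \in [:: a; b; c; d], b \in [:: a; b; c; d], c \in [:: a; b; c; d] & d \in [:: a; b; c; d]].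
Proof. by rewrite !inE !eqxx !orbT. Qed.

Lemma uniq4a (T : eqType) (a b c d : T) : uniq [:: a; b; c; d] ->
  [/\ a != c, a != d & c != d].
Proof.
rewrite /= !inE !negb_or => /andP[/and3P[ab ac ad] /andP[/andP[bc bd] /andP[cd _]]].
by split.
Qed.
Lemma uniq4b (T : eqType) (a b c d : T) : uniq [:: a; b; c; d] ->
  [/\ a != b, a != c & b != c].
Proof.
rewrite /= !inE !negb_or => /andP[/and3P[ab ac ad] /andP[/andP[bc bd] /andP[cd _]]].
by split.
Qed.

Variable u : int -> int -> C.
Hypothesis hpat : is_circle_pattern u.
Hypothesis hnz : face_variables_nonzero u.

Lemma D1 m n : u m n != u (m + 1) (n + 1).
Proof.
case: hpat => p hp.
have [_ [r0 h0]] := hp m n.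
have [un1 [r1 h1]] := hp (m + 1) n.
have [_ [r2 h2]] := hp (m + 1) (n + 1).
apply/eqP => E.
have [_ q2 _ q4] := inl4 (p m n) (p (m + 1) n) (p m (n + 1)) (p (m + 1) (n + 1)).
have e0 := h0 _ q4. have k5 := h0 _ q2.
have [g1 _ g3 g4] := inl4 (p (m + 1) n) (p (m + 1 + 1) n) (p (m + 1) (n + 1)) (p (m + 1 + 1) (n + 1)).
have f1 := h1 _ g1. have f3 := h1 _ g3. have f4 := h1 _ g4.
have [w1 w2 _ _] := inl4 (p (m + 1) (n + 1)) (p (m + 1 + 1) (n + 1)) (p (m + 1) (n + 1 + 1)) (p (m + 1 + 1) (n + 1 + 1)).
move: (h2 _ w1) (h2 _ w2); rewrite -E => k1 k2.
have r02 : r0 = r2 by rewrite -e0 k1.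
have [b c f] := uniq4a un1.
have := three_pts b c f f1 f3 f4 k5 e0 (etrans k2 (esym r02)).
move=> Hu; have := (hnz m n).1; by rewrite /hprod Hu subrr mul0r eqxx.
Qed.

Lemma D2 m n : u (m + 1) n != u m (n + 1).
Proof.
case: hpat => p hp.
have [_ [r1 h1]] := hp (m + 1) n.
have [_ [r3 h3]] := hp m (n + 1).
have [un2 [r2 h2]] := hp (m + 1) (n + 1).
apply/eqP => E.
have [_ _ g3 g4] := inl4 (p (m + 1) n) (p (m + 1 + 1) n) (p (m + 1) (n + 1)) (p (m + 1 + 1) (n + 1)).
have f1 := h1 _ g3. have f2 := h1 _ g4.
have [_ q2 _ q3] := inl4 (p m (n + 1)) (p (m + 1) (n + 1)) (p m (n + 1 + 1)) (p (m + 1) (n + 1 + 1)).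
move: (h3 _ q2) (h3 _ q3); rewrite -E => e1 e3.
have r13 : r3 = r1 by rewrite -e1 f1.
have [w1 w2 w3 _] := inl4 (p (m + 1) (n + 1)) (p (m + 1 + 1) (n + 1)) (p (m + 1) (n + 1 + 1)) (p (m + 1 + 1) (n + 1 + 1)).
have k1 := h2 _ w1. have k2 := h2 _ w2. have k3 := h2 _ w3.
have [a b c] := uniq4b un2.
have Hu := three_pts a b c k1 k2 k3 f1 f2 (etrans e3 r13).
have := (hnz (m + 1) (n + 1)).1.
by rewrite /hprod addrK Hu E subrr mulr0 eqxx.
Qed.

Lemma diag m n m' n' : (m' == m + 1) || (m' == m - 1) -> (n' == n + 1) || (n' == n - 1) ->
  u m n != u m' n'.
Proof.
case/orP => /eqP hm; case/orP => /eqP hn.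
- by rewrite hm hn D1.
- have e : n' + 1 = n by lia.
  rewrite hm; have := D2 m n'; rewrite e eq_sym; done.
- have e : m' + 1 = m by lia.
  rewrite hn; have := D2 m' n; rewrite e; done.
- have e1 : m' + 1 = m by lia.
  have e2 : n' + 1 = n by lia.
  have := D1 m' n'; rewrite e1 e2 eq_sym; done.
Qed.
Definition Kf (w : int -> int -> C) m n := - (hprod w m n / vprod w m n).

Lemma XbE (w : int -> int -> C) m n : Xb w m n = if black m n then Kf w m n else (Kf w m n)^-1.
Proof. rewrite /Xb /Kf; case: ifP => // _; by rewrite invrN invf_div. Qed.

Lemma KinvE (w : int -> int -> C) m n : (Kf w m n)^-1 = - (vprod w m n / hprod w m n).
Proof. by rewrite /Kf invrN invf_div. Qed.

Lemma dg m n m' n' : (m' == m + 1) || (m' == m - 1) -> (n' == n + 1) || (n' == n - 1) ->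
  u m n != u m' n'.
Proof. exact: diag. Qed.

Lemma mut_self col u' : mutation col u u' -> forall m n, black m n = col -> Kf u' m n = Kf u m n.
Proof.
move=> hm m n hb.
have unch : forall p q, black p q = ~~ col -> u' p q = u p q.
  have nc : (~~ col == col) = false by case: (col).
  by move=> p q h; have := hm p q; rewrite h nc.
have hc := hm m n; rewrite hb eqxx in hc.
rewrite /Kf /hprod /vprod (unch (m + 1) n) ?parity_l ?hb // (unch (m - 1) n) ?parity_l2 ?hb //.
rewrite (unch m (n + 1)) ?parity_r ?hb // (unch m (n - 1)) ?parity_r2 ?hb //.
apply: self_face hc _ _ _ _ (hnz m n).2.
- by rewrite eq_sym; apply: dg; rewrite ?addrK ?subrK ?eqxx ?orbT.
- by rewrite eq_sym; apply: dg; rewrite ?addrK ?subrK ?eqxx ?orbT.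
- by rewrite eq_sym; apply: dg; rewrite ?addrK ?subrK ?eqxx ?orbT.
- by rewrite eq_sym; apply: dg; rewrite ?addrK ?subrK ?eqxx ?orbT.
Qed.

Lemma mut_nb col u' : mutation col u u' -> forall m n, black m n = ~~ col ->
  Kf u' m n = (Kf u m n)^-1 * (1 + Kf u m (n + 1)) * (1 + Kf u m (n - 1))
     / ((1 + (Kf u (m + 1) n)^-1) * (1 + (Kf u (m - 1) n)^-1)).
Proof.
move=> hm m n hb.
have nc : (~~ col == col) = false by case: (col).
have hu : u' m n = u m n by have := hm m n; rewrite hb nc.
have mv : forall p q, black p q = col -> central_move (u (p + 1) q) (u (p - 1) q) (u p (q + 1)) (u p (q - 1)) (u p q) (u' p q).
  by move=> p q h; have := hm p q; rewrite h eqxx.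
have hA := mv (m + 1) n; rewrite parity_l hb negbK addrK in hA.
have hB := mv (m - 1) n; rewrite parity_l2 hb negbK subrK in hB.
have hC := mv m (n + 1); rewrite parity_r hb negbK addrK in hC.
have hD := mv m (n - 1); rewrite parity_r2 hb negbK subrK in hD.
move: (hnz m n) (hnz (m + 1) n) (hnz (m - 1) n) (hnz m (n + 1)) (hnz m (n - 1)).
rewrite /hprod /vprod !addrK ?subrK.
move=> [nHx nVx] [nHA nVA] [nHB nVB] [nHC nVC] [nHD nVD].
have := nb_face (hA erefl) (hB erefl) (hC erefl) (hD erefl) _ _ _ _ nHx nVx nHA nVA nHB nVB nHC nVC nHD nVD.
rewrite (KinvE u m n) /Kf /hprod /vprod !addrK ?subrK hu; apply; apply: dg; by rewrite ?eqxx ?orbT.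
Qed.
End S.

Lemma pos_equiv (C : numClosedFieldType) (X Y : int -> int -> C) (col : int -> int -> bool) :
  (forall m n, col (m + 1) n = ~~ col m n) -> (forall m n, col (m - 1) n = ~~ col m n) ->
  (forall m n, col m (n + 1) = ~~ col m n) -> (forall m n, col m (n - 1) = ~~ col m n) ->
  (forall m n, Y m n = if col m n then (X m n)^-1
        else X m n * (1 + X m (n + 1)) * (1 + X m (n - 1))
             / ((1 + (X (m + 1) n)^-1) * (1 + (X (m - 1) n)^-1))) ->
  (forall m n, 0 < X m n) <-> (forall m n, 0 < Y m n).
Proof.
move=> c1 c2 c3 c4 F; split.
- move=> hX m n; rewrite F; case: ifP => _; first by rewrite invr_gt0.
  by rewrite divr_gt0 ?mulr_gt0 ?addr_gt0 ?ltr01 ?invr_gt0.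
- move=> hY.
  have hc : forall m n, col m n -> 0 < X m n.
    by move=> m n c; have := hY m n; rewrite F c invr_gt0.
  move=> m n; case c: (col m n); first exact: hc.
  have p1 : 0 < 1 + X m (n + 1) by rewrite addr_gt0 ?ltr01 ?hc ?c3 ?c.
  have p2 : 0 < 1 + X m (n - 1) by rewrite addr_gt0 ?ltr01 ?hc ?c4 ?c.
  have p3 : 0 < 1 + (X (m + 1) n)^-1 by rewrite addr_gt0 ?ltr01 ?invr_gt0 ?hc ?c1 ?c.
  have p4 : 0 < 1 + (X (m - 1) n)^-1 by rewrite addr_gt0 ?ltr01 ?invr_gt0 ?hc ?c2 ?c.
  have -> : X m n = Y m n * ((1 + (X (m + 1) n)^-1) * (1 + (X (m - 1) n)^-1))
      / ((1 + X m (n + 1)) * (1 + X m (n - 1))).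
    have q1 : 0 < X (m + 1) n by rewrite hc ?c1 ?c.
    have q2 : 0 < X (m - 1) n by rewrite hc ?c2 ?c.
    have q3 : 0 < X m (n + 1) by rewrite hc ?c3 ?c.
    have q4 : 0 < X m (n - 1) by rewrite hc ?c4 ?c.
    have e1 := lt0r_neq0 q1. have e2 := lt0r_neq0 q2.
    have e3 := lt0r_neq0 q3. have e4 := lt0r_neq0 q4.
    have f1 : X (m + 1) n + 1 != 0 by rewrite lt0r_neq0 // addr_gt0 ?ltr01.
    have f2 : X (m - 1) n + 1 != 0 by rewrite lt0r_neq0 // addr_gt0 ?ltr01.
    have f3 : X m (n + 1) + 1 != 0 by rewrite lt0r_neq0 // addr_gt0 ?ltr01.
    have f4 : X m (n - 1) + 1 != 0 by rewrite lt0r_neq0 // addr_gt0 ?ltr01.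
    have g3 : 1 + X m (n + 1) != 0 by rewrite addrC.
    have g4 : 1 + X m (n - 1) != 0 by rewrite addrC.
    rewrite F c; field.
    by rewrite ?e1 ?e2 ?e3 ?e4 ?f1 ?f2 ?f3 ?f4 ?g3 ?g4.
  by rewrite divr_gt0 ?mulr_gt0 ?hY.
Qed.


Theorem mainTheorem12 (C : numClosedFieldType) (u : int -> int -> C) :
  is_circle_pattern u -> face_variables_nonzero u ->
  (forall u' : int -> int -> C, black_mutation u u' ->
     (forall m n, Xw u' m n =
        if black m n then (Xb u m n)^-1
        else Xb u m n * (1 + Xb u m (n + 1)) * (1 + Xb u m (n - 1))
             / ((1 + (Xb u (m + 1) n)^-1) * (1 + (Xb u (m - 1) n)^-1)))
     /\ ((forall m n, 0 < Xb u m n) <-> (forall m n, 0 < Xw u' m n)))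
  /\
  (forall u' : int -> int -> C, white_mutation u u' ->
     (forall m n, Xb u' m n =
        if ~~ black m n then (Xw u m n)^-1
        else Xw u m n * (1 + Xw u m (n + 1)) * (1 + Xw u m (n - 1))
             / ((1 + (Xw u (m + 1) n)^-1) * (1 + (Xw u (m - 1) n)^-1)))
     /\ ((forall m n, 0 < Xw u m n) <-> (forall m n, 0 < Xb u' m n))).
Proof.
move=> hpat hnz; split.
- move=> u' hm.
  have F : forall m n, Xw u' m n =
        if black m n then (Xb u m n)^-1
        else Xb u m n * (1 + Xb u m (n + 1)) * (1 + Xb u m (n - 1))
             / ((1 + (Xb u (m + 1) n)^-1) * (1 + (Xb u (m - 1) n)^-1)).
    move=> m n; rewrite /Xw !XbE; case hb: (black m n).
    + by rewrite (mut_self hpat hnz hm hb).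
    + rewrite invrK (mut_nb hpat hnz hm hb).
      by rewrite parity_r parity_r2 parity_l parity_l2 hb.
  split => //; apply: (pos_equiv (col := black)) F.
  + exact: parity_l. + exact: parity_l2. + exact: parity_r. + exact: parity_r2.
- move=> u' hm.
  have F : forall m n, Xb u' m n =
        if ~~ black m n then (Xw u m n)^-1
        else Xw u m n * (1 + Xw u m (n + 1)) * (1 + Xw u m (n - 1))
             / ((1 + (Xw u (m + 1) n)^-1) * (1 + (Xw u (m - 1) n)^-1)).
    move=> m n; rewrite /Xw !XbE; case hb: (black m n) => /=.
    + rewrite (mut_nb hpat hnz hm hb).
      by rewrite parity_r parity_r2 parity_l parity_l2 hb /= !invrK.
    + by rewrite (mut_self hpat hnz hm hb) invrK.
  split => //; apply: (pos_equiv (col := fun m n => ~~ black m n)) F => m n /=.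
  + by rewrite parity_l. + by rewrite parity_l2. + by rewrite parity_r. + by rewrite parity_r2.
Qed.
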